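(* Let $N\ge2$ be an integer and let $\omega$ be a primitive $N$-th root of unity. For all nonzero complex numbers $b,z$, $$\sum_{k=0}^{N-1}(b;\omega)_k\,z^k=\Big(\frac{bz}{\omega}\Big)^{N-1}\sum_{k=0}^{N-1}(\omega/z;\omega)_k\Big(\frac{\omega}{b}\Big)^k .$$
   Context: $(x;q)_k=\prod_{m=1}^{k}(1-xq^{m-1})$ denotes the $q$-Pochhammer symbol, with $(x;q)_0=1$. *)

(* Defs.v *)
From HB Require Import structures.
From mathcomp Require Import all_boot all_order all_algebra all_field.
Set Implicit Arguments. Unset Strict Implicit. Unset Printing Implicit Defensive.
Import Order.TTheory GRing.Theory Num.Theory.
Local Open Scope ring_scope.

Definition qpoch (R : comNzRingType) (x q : R) (k : nat) : R :=
  \prod_(0 <= m < k) (1 - x * q ^+ m).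

(* Main.v *)
Require Import Defs.
From HB Require Import structures.
From mathcomp Require Import all_boot all_order all_algebra all_field.
From mathcomp Require Import ring lra.
Import Order.TTheory GRing.Theory Num.Theory.
Local Open Scope ring_scope.

Lemma qpochS (R : comNzRingType) (x q : R) k :
  qpoch x q k.+1 = qpoch x q k * (1 - x * q ^+ k).
Proof. by rewrite /qpoch big_nat_recr. Qed.

Lemma qpochSl (R : comNzRingType) (x q : R) k :
  qpoch x q k.+1 = (1 - x) * qpoch (q * x) q k.
Proof.
rewrite /qpoch big_nat_recl // expr0 mulr1; congr (_ * _).
by apply: eq_bigr => m _; rewrite exprS mulrCA mulrA.
Qed.

Lemma qpochN (C : fieldType) N (q x : C) : N.-primitive_root q ->
  qpoch x q N = 1 - x ^+ N.
Proof.
move=> pq; have N0 := prim_order_gt0 pq.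
have [->|x0] := eqVneq x 0.
  rewrite expr0n -(prednK N0) /= /qpoch big1 ?subr0 // => m _.
  by rewrite mul0r subr0.
have := congr1 (fun p => p.[x^-1]) (factor_Xn_sub_1 pq).
rewrite horner_prod hornerE (eq_bigr (fun m => x^-1 - q ^+ m)); last by move=> m _; rewrite !hornerE.
move=> H.
transitivity (\prod_(0 <= m < N) (x * (x^-1 - q ^+ m))).
  by apply: eq_bigr => m _; rewrite mulrBr mulfV.
rewrite big_split /= prodr_const_nat subn0 H.
rewrite hornerXn hornerN hornerC mulrDr -exprMn mulfV // expr1n mulrN1 addrC.
done.
Qed.

Definition FF (C : comNzRingType) N (q a w : C) :=
  \sum_(0 <= k < N) qpoch a q k * w ^+ k.
Arguments FF {C} N q a w.

Lemma E1 (C : fieldType) N (q a w : C) : N.-primitive_root q ->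
  FF N q a w * (1 - w) + a * w * FF N q a (q * w) = 1 - (1 - a ^+ N) * w ^+ N.
Proof.
move=> pq.
set S := \sum_(0 <= k < N) qpoch a q k.+1 * w ^+ k.+1.
have h1 : FF N q a w + qpoch a q N * w ^+ N = 1 + S.
  rewrite /FF -big_nat_recr //= big_nat_recl //= /qpoch big_nil expr0 mulr1.
  done.
have h2 : S = w * FF N q a w - a * w * FF N q a (q * w).
  rewrite /FF !mulr_sumr -sumrB; apply: eq_bigr => k _.
  rewrite qpochS exprMn exprS; ring.
rewrite (@qpochN _ N q a pq) in h1.
have : FF N q a w + (1 - a ^+ N) * w ^+ N - (1 + S) = 0 by rewrite h1 subrr.
rewrite h2 => h; apply/eqP; rewrite -subr_eq0 -h; apply/eqP; ring.
Qed.

Lemma E2 (C : fieldType) N (q a w : C) : N.-primitive_root q ->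
  FF N q a w = 1 - w ^+ N * (1 - a ^+ N) + (1 - a) * w * FF N q (q * a) w.
Proof.
move=> pq; have := prim_order_gt0 pq; case: N pq => // n pq _.
rewrite /FF big_nat_recl // [in RHS]big_nat_recr //= /qpoch big_nil expr0 mulr1.
rewrite -/(qpoch _ _ _).
have -> : \sum_(0 <= i < n) qpoch a q i.+1 * w ^+ i.+1 =
   (1 - a) * w * \sum_(0 <= i < n) qpoch (q * a) q i * w ^+ i.
  rewrite mulr_sumr; apply: eq_bigr => i _; rewrite qpochSl exprS; ring.
rewrite -(@qpochN _ n.+1 q a pq) qpochSl.
change (\sum_(0 <= i < n) \prod_(0 <= m < i) (1 - q * a * q ^+ m) * w ^+ i) with
  (\sum_(0 <= i < n) qpoch (q * a) q i * w ^+ i).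
rewrite exprS; ring.
Qed.

Lemma ER (C : fieldType) n (q b z : C) : (n.+1).-primitive_root q ->
  b != 0 -> z != 0 ->
  (b * z / q) ^+ n * FF n.+1 q (q / z) (q / b) =
  1 - z ^+ n.+1 * (1 - b ^+ n.+1) +
  (1 - b) * z * ((q * b * z / q) ^+ n * FF n.+1 q (q / z) (q / (q * b))).
Proof.
move=> pq b0 z0.
have q0 : q != 0.
  apply/negP => /eqP q0; move: (prim_expr_order pq); rewrite q0 expr0n /= => /eqP; by rewrite eq_sym oner_eq0.
have qn : q ^+ n = q^-1.
  by apply: (mulfI q0); rewrite mulfV // -exprS (prim_expr_order pq).
have h := @E1 _ n.+1 q (q / z) (b^-1) pq.
have -> : q / (q * b) = b^-1 by rewrite invfM mulrA mulfV // mul1r.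
move: h; set X := FF _ _ _ (b^-1); set Y := FF _ _ _ (q * b^-1) => h.
have -> : q * b * z / q = b * z by field.
have hY : Y = (1 - (1 - (q / z) ^+ n.+1) * b^-1 ^+ n.+1 - X * (1 - b^-1)) * b / (q / z).
  rewrite -h; field; rewrite q0 z0 b0 //.
rewrite hY !exprS !exprMn !exprVn qn.
field.
by rewrite q0 z0 b0 !expf_neq0 // oner_eq0.
Qed.

Lemma poly_zero_nz (C : numClosedFieldType) (p : {poly C}) :
  (forall x, x != 0 -> p.[x] = 0) -> p = 0.
Proof.
move=> H; apply: (@roots_geq_poly_eq0 _ p [seq (i.+1)%:R | i <- iota 0 (size p)]).
- apply/allP => _ /mapP [i _ ->]; apply/rootP; apply: H.
  by rewrite pnatr_eq0.
- rewrite map_inj_uniq ?iota_uniq // => i j /eqP; rewrite eqr_nat => /eqP [].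
  done.
- by rewrite size_map size_iota.
Qed.

Section Main.
Variables (C : numClosedFieldType) (n : nat) (q z : C).
Hypothesis pq : (n.+1).-primitive_root q.
Hypothesis z0 : z != 0.

Let R b := (b * z / q) ^+ n * FF n.+1 q (q / z) (q / b).
Let D b := FF n.+1 q b z - R b.

Lemma q0 : q != 0.
Proof.
apply/negP => /eqP q0; move: (prim_expr_order pq); rewrite q0 expr0n /= => /eqP.
by rewrite eq_sym oner_eq0.
Qed.

Lemma Dstep b : b != 0 -> D b = (1 - b) * z * D (q * b).
Proof.
move=> b0; rewrite /D /R (@E2 _ n.+1 q b z pq) (@ER _ n q b z pq b0 z0); ring.
Qed.

Lemma Diter b : b != 0 -> forall k, D b = qpoch b q k * z ^+ k * D (q ^+ k * b).
Proof.
move=> b0; elim => [|k IH].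
  by rewrite /qpoch big_nil expr0 !mul1r.
have qkb : q ^+ k * b != 0 by rewrite mulf_neq0 ?expf_neq0 ?q0.
rewrite IH (@Dstep _ qkb) qpochS exprS mulrA [q ^+ k.+1]exprS; ring.
Qed.

Lemma Dfix b : b != 0 -> D b * (1 - (1 - b ^+ n.+1) * z ^+ n.+1) = 0.
Proof.
move=> b0; have := @Diter b b0 n.+1.
rewrite (prim_expr_order pq) mul1r (@qpochN _ n.+1 q b pq) => h.
by apply/eqP; rewrite mulrBr mulr1 subr_eq0 {1}h mulrC.
Qed.

Let Pp : {poly C} := \sum_(0 <= k < n.+1) z ^+ k *: \prod_(0 <= m < k) (1 - (q ^+ m)%:P * 'X).

Lemma Pp_eval x : Pp.[x] = FF n.+1 q x z.
Proof.
rewrite /Pp /FF horner_sum; apply: eq_bigr => k _.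
rewrite hornerZ horner_prod mulrC /qpoch; congr (_ * _).
by apply: eq_bigr => m _; rewrite !hornerE mulrC.
Qed.

Let Rp : {poly C} := \sum_(0 <= j < n.+1) (qpoch (q / z) q j * (z / q) ^+ n * q ^+ j) *: 'X^(n - j).

Lemma Rp_eval x : x != 0 -> Rp.[x] = R x.
Proof.
move=> x0; rewrite /Rp /R /FF horner_sum mulr_sumr; apply: eq_big_nat => j /andP [_ hj].
have e : x ^+ n = x ^+ (n - j) * x ^+ j by rewrite -exprD subnK.
rewrite hornerZ hornerXn !exprMn !exprVn e.
have q0' := q0.
field.
by rewrite !expf_neq0.
Qed.

Let Ep : {poly C} := 1 - (z ^+ n.+1)%:P * (1 - 'X^(n.+1)).

Lemma Ep_neq0 : Ep != 0.
Proof.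
apply/negP => /eqP e; have := congr1 (fun p : {poly C} => p`_n.+1) e.
rewrite /Ep coefB coef1 coefCM coefB coef1 coefXn eqxx /= coef0 !sub0r mulrN mulr1 opprK.
by move/eqP; rewrite expf_eq0 (negbTE z0) andbF.
Qed.

Lemma Dzero b : b != 0 -> FF n.+1 q b z = R b.
Proof.
move=> b0.
have hz : (Pp - Rp) * Ep = 0.
  apply: poly_zero_nz => x x0.
  rewrite hornerM hornerD hornerN Pp_eval Rp_eval // /Ep !hornerE.
  have := @Dfix x x0; rewrite /D => <-; congr (_ * (1 - _)); rewrite mulrC.
  done.
move/eqP: hz; rewrite mulf_eq0 (negbTE Ep_neq0) orbF subr_eq0 => /eqP e.
have := congr1 (fun p : {poly C} => p.[b]) e; rewrite /= Pp_eval Rp_eval //.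
Qed.

End Main.

Theorem mainTheorem3 (C : numClosedFieldType) (N : nat) (omega b z : C) :
  (2 <= N)%N -> N.-primitive_root omega -> b != 0 -> z != 0 ->
  \sum_(0 <= k < N) qpoch b omega k * z ^+ k =
  (b * z / omega) ^+ N.-1 *
    \sum_(0 <= k < N) qpoch (omega / z) omega k * (omega / b) ^+ k.
Proof.
case: N => // n _ pq b0 z0.
exact: (@Dzero C n omega z pq z0 b b0).
Qed.
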